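(* Let $\mathcal{G}=(\mathcal{V}_x,\mathcal{E}_x)$ be a finite simple undirected graph with edge probabilities $p:\mathcal{E}_x\to[0,1]$, and let $k\ge 1$ be an integer. Let $f:2^{\mathcal{E}_x}\to\mathbb{R}_{\ge0}$ be the modular function $f(\mathcal{E})=\sum_{e\in\mathcal{E}}p(e)$. Define $g:2^{\mathcal{V}_x}\to\mathbb{R}_{\ge 0}$ by $g(\varnothing)=0$ and, for $\mathcal{V}\subseteq\mathcal{V}_x$, $$g(\mathcal{V})=\max\Big\{\textstyle\sum_{e\in\mathcal{E}}p(e)\;:\;\mathcal{E}\subseteq \mathsf{edges}(\mathcal{V}),\ |\mathcal{E}|\le k\Big\}$$ (i.e., the sum of the $k$ largest edge probabilities in $\mathsf{edges}(\mathcal{V})$, or the sum over all of $\mathsf{edges}(\mathcal{V})$ if it has at most $k$ edges). Then $g$ is normalized, monotone, and submodular.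
   Context: For $\mathcal{V}\subseteq\mathcal{V}_x$, $\mathsf{edges}(\mathcal{V})$ denotes the set of all edges of $\mathcal{G}$ incident to at least one vertex in $\mathcal{V}$. A set function $h:2^{W}\to\mathbb{R}_{\ge0}$ on a finite set $W$ is normalized if $h(\varnothing)=0$, monotone if $h(A)\le h(B)$ whenever $A\subseteq B$, and submodular if $h(A)+h(B)\ge h(A\cup B)+h(A\cap B)$ for all $A,B\subseteq W$. *)

(* Defs.v *)
From HB Require Import structures.
From mathcomp Require Import all_boot all_order all_algebra.
Set Implicit Arguments. Unset Strict Implicit. Unset Printing Implicit Defensive.
Import Order.TTheory GRing.Theory Num.Theory.
Local Open Scope ring_scope.

Definition simple_graph (V : finType) (E : {set {set V}}) : bool :=
  [forall e in E, #|e| == 2%N].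

Definition edges (V : finType) (E : {set {set V}}) (U : {set V}) : {set {set V}} :=
  [set e in E | [exists v in U, v \in e]].

Definition fmod (R : realFieldType) (V : finType) (p : {set V} -> R)
  (F : {set {set V}}) : R := \sum_(e in F) p e.

Definition gfun (R : realFieldType) (V : finType) (E : {set {set V}})
  (p : {set V} -> R) (k : nat) (U : {set V}) : R :=
  if U == set0 then 0 else
  \big[Num.max/0]_(F in powerset (edges E U) | (#|F| <= k)%N) fmod p F.

Definition normalized (R : realFieldType) (W : finType) (h : {set W} -> R) : Prop :=
  h set0 = 0.
Definition monotone (R : realFieldType) (W : finType) (h : {set W} -> R) : Prop :=
  forall A B : {set W}, A \subset B -> h A <= h B.
Definition submodular (R : realFieldType) (W : finType) (h : {set W} -> R) : Prop :=
  forall A B : {set W}, h A + h B >= h (A :|: B) + h (A :&: B).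

(* Main.v *)
Require Import Defs.
From HB Require Import structures.
From mathcomp Require Import all_boot all_order all_algebra.
From mathcomp Require Import zify lra.
Import Order.TTheory GRing.Theory Num.Theory.
Local Open Scope ring_scope.

Section Aux.
Variables (R : realFieldType) (V : finType) (p : {set V} -> R) (k : nat).
Let W := {set V}.

Definition GG (X : {set W}) : R :=
  \big[Num.max/0]_(F in powerset X | (#|F| <= k)%N) fmod p F.

Lemma G_ub (X F : {set W}) : F \subset X -> (#|F| <= k)%N -> fmod p F <= GG X.
Proof.
move=> sFX cF; rewrite /GG.
by apply: le_bigmax_cond; rewrite powersetE sFX.
Qed.

Lemma G_lub (X : {set W}) (c : R) : 0 <= c ->
  (forall F : {set W}, F \subset X -> (#|F| <= k)%N -> fmod p F <= c) -> GG X <= c.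
Proof.
move=> c0 H; rewrite /GG; apply: bigmax_le => // F; rewrite powersetE => /andP[].
exact: H.
Qed.

Lemma fmod0 : fmod p set0 = 0.
Proof. by rewrite /fmod big_set0. Qed.

Lemma G_ge0 (X : {set W}) : 0 <= GG X.
Proof. by rewrite -fmod0; apply: G_ub; rewrite ?sub0set ?cards0. Qed.

Lemma G_mono (X Y : {set W}) : X \subset Y -> GG X <= GG Y.
Proof.
move=> sXY; apply: G_lub; first exact: G_ge0.
move=> F sFX cF; apply: G_ub => //; exact: subset_trans sXY.
Qed.

Lemma G0 : GG set0 = 0.
Proof.
apply/eqP; rewrite eq_le G_ge0 andbT; apply: G_lub => // F.
by rewrite subset0 => /eqP -> _; rewrite fmod0.
Qed.

Lemma wU (A B : {set W}) : (forall x, x \in A -> x \notin B) ->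
  fmod p (A :|: B) = fmod p A + fmod p B.
Proof.
move=> dAB; rewrite /fmod (big_setID (A := A :|: B) A); congr (_ + _).
  by apply: eq_bigl => x; rewrite !inE; case: (x \in A); rewrite ?andbT ?andbF.
apply: eq_bigl => x; rewrite !inE.
case Ax: (x \in A) => /=; last by [].
by rewrite (negbTE (dAB x Ax)).
Qed.

Lemma wID (A B : {set W}) : fmod p A = fmod p (A :&: B) + fmod p (A :\: B).
Proof. by rewrite /fmod (big_setID (A := A) B). Qed.

Lemma sub_card (A : {set W}) n : (n <= #|A|)%N ->
  exists A1 : {set W}, A1 \subset A /\ #|A1| = n.
Proof.
elim: n => [|n IH] hn; first by exists set0; rewrite sub0set cards0.
have [A1 [sA1 cA1]] := IH (ltnW hn).
have : (0 < #|A :\: A1|)%N.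
  by have := cardsID A1 A; have := subset_leq_card (subsetIr A A1); lia.
case/card_gt0P => x; rewrite inE => /andP[xA1 xA].
exists (x |: A1); split; first by rewrite subUset sub1set xA sA1.
by rewrite cardsU1 xA1 cA1.
Qed.

Lemma exch (X Y S T : {set W}) : S \subset X :|: Y -> T \subset X :&: Y ->
  (#|S| <= k)%N -> (#|T| <= k)%N ->
  fmod p S + fmod p T <= GG X + GG Y.
Proof.
move=> sS sT cS cT.
set a := #|S :&: X|.
set Rr := T :\: S.
have [R1 [sR1 cR1]] := @sub_card Rr (minn #|Rr| (k - a)) (geq_minl _ _).
set R2 := Rr :\: R1.
have TX : T \subset X by apply: subset_trans sT (subsetIl _ _).
have TY : T \subset Y by apply: subset_trans sT (subsetIr _ _).
have RrT : Rr \subset T by rewrite /Rr subsetDl.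
have R1S : forall x, x \in R1 -> x \notin S.
  by move=> x /(subsetP sR1); rewrite inE => /andP[].
have R2S : forall x, x \in R2 -> x \notin S.
  by move=> x; rewrite !inE => /and3P[].
pose S1 := (S :&: X) :|: R1.
pose S2 := ((S :\: X) :|: (T :&: S)) :|: R2.
have eS1 : fmod p S1 = fmod p (S :&: X) + fmod p R1.
  apply: wU => x; rewrite inE => /andP[xS _]; apply/negP => xR; by move: (R1S x xR); rewrite xS.
have eS2 : fmod p S2 = fmod p (S :\: X) + fmod p (T :&: S) + fmod p R2.
  rewrite /S2 wU; last first.
    move=> x; rewrite !inE => /orP[/andP[_ xS]|/andP[_ xS]];
      by apply/negP; rewrite ?inE xS ?andbF.
  rewrite wU // => x; rewrite !inE => /andP[xX _]; apply/negP => /andP[xT _].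
  by move: xX; rewrite (subsetP TX x xT).
have eS : fmod p S = fmod p (S :&: X) + fmod p (S :\: X) := wID S X.
have eT : fmod p T = fmod p (T :&: S) + fmod p Rr := wID T S.
have eR : fmod p Rr = fmod p R1 + fmod p R2.
  by rewrite (wID Rr R1); congr (_ + _); congr (fmod p _); apply/setIidPr.
have S1X : S1 \subset X.
  by rewrite subUset subsetIr (subset_trans sR1) // (subset_trans RrT).
have S2Y : S2 \subset Y.
  rewrite !subUset; apply/andP; split; first (apply/andP; split).
  - apply/subsetP => x; rewrite inE => /andP[xX xS].
    by move: (subsetP sS x xS); rewrite inE (negbTE xX).
  - exact: subset_trans (subsetIl _ _) TY.
  - exact: subset_trans (subsetDl Rr R1) (subset_trans RrT TY).
have cS1 : (#|S1| <= k)%N.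
  rewrite /S1 cardsU.
  have : (a <= #|S|)%N by apply: subset_leq_card; apply: subsetIl.
  rewrite -/a cR1; lia.
have cS2 : (#|S2| <= k)%N.
  have h1 := cardsID X S.
  have h2 := cardsID S T.
  have h3 := cardsID R1 Rr.
  have h4 : #|Rr :&: R1| = #|R1| by rewrite (setIidPr sR1).
  have h5 : (#|T :&: S| <= a)%N.
    apply: subset_leq_card; apply/subsetP => x; rewrite !inE => /andP[xT xS].
    by rewrite xS (subsetP TX x xT).
  have h6 := (leq_card_setU ((S :\: X) :|: (T :&: S)) R2).1.
  have h7 := (leq_card_setU (S :\: X) (T :&: S)).1.
  rewrite -/a -/R2 in h1 h5 h3 h4.
  move: h1 h2 h3 h4 h5 h6 h7 cR1 cS cT; rewrite /S2 /R2 /Rr /a; lia.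
apply: (@le_trans _ _ (fmod p S1 + fmod p S2)).
  rewrite eS1 eS2 eS eT eR; lra.
by apply: lerD; apply: G_ub.
Qed.

Lemma G_sub (X Y : {set W}) : GG (X :|: Y) + GG (X :&: Y) <= GG X + GG Y.
Proof.
have hXY : GG (X :&: Y) <= GG X by apply: G_mono; apply: subsetIl.
have gY := G_ge0 Y.
suff : GG (X :|: Y) <= GG X + GG Y - GG (X :&: Y) by lra.
apply: G_lub; first lra.
move=> S sS cS.
suff : GG (X :&: Y) <= GG X + GG Y - fmod p S by lra.
apply: G_lub.
  have c0 : (#|(set0 : {set W})| <= k)%N by rewrite cards0.
  have := @exch X Y S set0 sS (sub0set _) cS c0; rewrite fmod0; lra.
move=> T sT cT; have := @exch X Y S T sS sT cS cT; lra.
Qed.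

End Aux.

Lemma edgesU (V : finType) (E : {set {set V}}) (A B : {set V}) :
  edges E (A :|: B) = edges E A :|: edges E B.
Proof.
apply/setP => e; rewrite !inE -andb_orr; congr (_ && _).
apply/existsP/orP.
  by case=> v /andP[]; rewrite inE => /orP[] vA ve; [left|right];
     apply/existsP; exists v; rewrite vA.
by case=> /existsP[v /andP[vA ve]]; exists v; rewrite inE vA ?orbT.
Qed.

Lemma edges_mono (V : finType) (E : {set {set V}}) (A B : {set V}) :
  A \subset B -> edges E A \subset edges E B.
Proof.
move=> sAB; apply/subsetP => e; rewrite !inE => /andP[-> /existsP[v /andP[vA ve]]].
by apply/existsP; exists v; rewrite (subsetP sAB v vA).
Qed.

Lemma gfunE (R : realFieldType) (V : finType) (E : {set {set V}})
  (p : {set V} -> R) (k : nat) (U : {set V}) : gfun E p k U = @GG R V p k (edges E U).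
Proof.
rewrite /gfun; case: eqP => [->|//].
have -> : edges E set0 = set0.
  apply/setP => e; rewrite !inE; apply/andP => -[_ /existsP[v]]; by rewrite inE.
by rewrite G0.
Qed.

Theorem theorem1 (R : realFieldType) (V : finType) (E : {set {set V}})
  (p : {set V} -> R) (k : nat) :
  simple_graph E ->
  (forall e, e \in E -> 0 <= p e <= 1) ->
  (1 <= k)%N ->
  [/\ normalized (gfun E p k), monotone (gfun E p k) & submodular (gfun E p k)].
Proof.
move=> _ _ _; split.
- by rewrite /normalized /gfun eqxx.
- by move=> A B sAB; rewrite !gfunE; apply: G_mono; apply: edges_mono.
- move=> A B; rewrite !gfunE edgesU.
  apply: (le_trans _ (@G_sub R V p k (edges E A) (edges E B))); apply: lerD => //.
  apply: G_mono; rewrite subsetI !edges_mono ?subsetIl ?subsetIr //.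
Qed.
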